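(* Let $\mathcal A$ be a Banach algebra and $(a_\alpha)_{\alpha\in\Lambda}$ a bounded net in $\mathcal A$ which is quasi-central, i.e. $\lim_\alpha(aa_\alpha-a_\alpha a)=0$ for all $a\in\mathcal A$. Put $I(a_\alpha)=\{a\in\mathcal A:\lim_\alpha aa_\alpha=a\}$, $K(a_\alpha)=\{a\in\mathcal A:\lim_\alpha aa_\alpha=0\}$, $C(a_\alpha)=\{a\in\mathcal A:(aa_\alpha)_\alpha \text{ is convergent}\}$, $L(a_\alpha)=\{\lim_\alpha aa_\alpha: a\in C(a_\alpha)\}$. If $L(a_\alpha)=I(a_\alpha)$ and $\mathcal A$ is $C(a_\alpha)$-weakly amenable, then (i) $\mathcal A$ is $I(a_\alpha)$-weakly amenable, and (ii) $\mathcal A$ is $K(a_\alpha)$-weakly amenable.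
   Context: The sets $I(a_\alpha),K(a_\alpha),C(a_\alpha),L(a_\alpha)$ are closed two-sided ideals of $\mathcal A$ (the ''net ideals''). For a closed two-sided ideal $J$, $J^*$ is a Banach $\mathcal A$-bimodule with $\langle x,a\cdot f\rangle=\langle xa,f\rangle$, $\langle x,f\cdot a\rangle=\langle ax,f\rangle$; $\mathcal A$ is $J$-weakly amenable if every derivation $D:\mathcal A\to J^*$ (continuous linear map with $D(ab)=a\cdot D(b)+D(a)\cdot b$) is inner, i.e. of the form $D(a)=a\cdot f-f\cdot a$ for some $f\in J^*$. *)

(* Defs.v *)
From HB Require Import structures.
From mathcomp Require Import all_boot all_order all_algebra.
From mathcomp Require Import all_classical all_reals all_analysis.
Set Implicit Arguments. Unset Strict Implicit. Unset Printing Implicit Defensive.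
Import Order.TTheory GRing.Theory Num.Theory.
Import numFieldNormedType.Exports.
Local Open Scope ring_scope.
Local Open Scope classical_set_scope.

Definition banach_algebra_mul (K : numFieldType) (A : completeNormedModType K)
  (mul : A -> A -> A) : Prop :=
  [/\ (forall a b c, mul a (mul b c) = mul (mul a b) c),
      (forall (k : K) a b c, mul (k *: a + b) c = k *: mul a c + mul b c),
      (forall (k : K) a b c, mul c (k *: a + b) = k *: mul c a + mul c b)
    & (forall a b, `|mul a b| <= `|a| * `|b|)].

Definition directed_set (L : Type) (le : L -> L -> Prop) : Prop :=
  [/\ (exists l : L, True),
      (forall l, le l l),
      (forall l m n, le l m -> le m n -> le l n)
    & (forall l m, exists n, le l n /\ le m n)].

Definition net_cvg (K : numFieldType) (V : normedModType K) (L : Type)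
  (le : L -> L -> Prop) (x : L -> V) (y : V) : Prop :=
  forall e : K, 0 < e -> exists l0, forall l, le l0 l -> `|x l - y| < e.

Definition net_convergent (K : numFieldType) (V : normedModType K) (L : Type)
  (le : L -> L -> Prop) (x : L -> V) : Prop :=
  exists y, net_cvg le x y.

Definition net_bounded (K : numFieldType) (V : normedModType K) (L : Type)
  (x : L -> V) : Prop :=
  exists M : K, forall l, `|x l| <= M.

Definition quasi_central (K : numFieldType) (A : completeNormedModType K)
  (mul : A -> A -> A) (L : Type) (le : L -> L -> Prop) (u : L -> A) : Prop :=
  forall a : A, net_cvg le (fun l => mul a (u l) - mul (u l) a) 0.

Definition netI (K : numFieldType) (A : completeNormedModType K)
  (mul : A -> A -> A) (L : Type) (le : L -> L -> Prop) (u : L -> A) : set A :=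
  [set a | net_cvg le (fun l => mul a (u l)) a].

Definition netK (K : numFieldType) (A : completeNormedModType K)
  (mul : A -> A -> A) (L : Type) (le : L -> L -> Prop) (u : L -> A) : set A :=
  [set a | net_cvg le (fun l => mul a (u l)) 0].

Definition netC (K : numFieldType) (A : completeNormedModType K)
  (mul : A -> A -> A) (L : Type) (le : L -> L -> Prop) (u : L -> A) : set A :=
  [set a | net_convergent le (fun l => mul a (u l))].

Definition netL (K : numFieldType) (A : completeNormedModType K)
  (mul : A -> A -> A) (L : Type) (le : L -> L -> Prop) (u : L -> A) : set A :=
  [set y | exists2 a, netC mul le u a & net_cvg le (fun l => mul a (u l)) y].

(* Elements of the dual J^* of a subspace J of A are represented by
   functions f : A -> K, only their values on J being relevant:
   f is in J^* iff f is linear and bounded on J. *)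
Definition dual_elem (K : numFieldType) (A : completeNormedModType K)
  (J : set A) (f : A -> K) : Prop :=
  (forall (k : K) x y, J x -> J y -> f (k *: x + y) = k * f x + f y) /\
  (exists M : K, forall x, J x -> `|f x| <= M * `|x|).

(* D : A -> J^* (D a is the functional D a on J) is a continuous derivation
   for the bimodule actions <x, a.f> = <xa, f>, <x, f.a> = <ax, f>. *)
Definition is_derivation_into_dual (K : numFieldType) (A : completeNormedModType K)
  (mul : A -> A -> A) (J : set A) (D : A -> A -> K) : Prop :=
  [/\ (forall a, dual_elem J (D a)),
      (forall (k : K) a b x, J x -> D (k *: a + b) x = k * D a x + D b x),
      (exists M : K, forall a x, J x -> `|D a x| <= M * `|a| * `|x|)
    & (forall a b x, J x -> D (mul a b) x = D b (mul x a) + D a (mul b x))].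

Definition is_inner_into_dual (K : numFieldType) (A : completeNormedModType K)
  (mul : A -> A -> A) (J : set A) (D : A -> A -> K) : Prop :=
  exists2 f : A -> K, dual_elem J f &
    forall a x, J x -> D a x = f (mul x a) - f (mul a x).

Definition J_weakly_amenable (K : numFieldType) (A : completeNormedModType K)
  (mul : A -> A -> A) (J : set A) : Prop :=
  forall D : A -> A -> K, is_derivation_into_dual mul J D ->
    is_inner_into_dual mul J D.

(* Main.v *)
Require Import Defs.
From HB Require Import structures.
From mathcomp Require Import all_boot all_order all_algebra.
From mathcomp Require Import all_classical all_reals all_analysis.
Import Order.TTheory GRing.Theory Num.Theory.
Import numFieldNormedType.Exports.
Local Open Scope ring_scope.
Local Open Scope classical_set_scope.

Lemma nm_eq0 (K : numFieldType) (n : K) : 0 <= n ->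
  (forall e : K, 0 < e -> n < e + e) -> n = 0.
Proof.
move=> n0 H; case: (eqVneq n 0) => // nn0.
have np : 0 < n by rewrite lt_def nn0 n0.
have := H (n / 2) (divr_gt0 np (ltr0Sn _ 1)).
by rewrite -splitr ltxx.
Qed.

Lemma nm_le (K : numFieldType) (a b : K) : 0 <= a -> 0 <= b ->
  (forall e : K, 0 < e -> a < b + e) -> a <= b.
Proof.
move=> a0 b0 H; rewrite real_leNgt ?ger0_real //; apply/negP => ab.
have := H (a - b); rewrite subr_gt0 => /(_ ab).
by rewrite addrC subrK ltxx.
Qed.

Lemma cvg_lip (K : numFieldType) (V W : normedModType K) (L : Type)
  (le : L -> L -> Prop) (x : L -> V) (y : V) (z : L -> W) (w : W) (c : K) :
  net_cvg le x y -> 0 <= c -> (forall l, `|z l - w| <= c * `|x l - y|) ->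
  net_cvg le z w.
Proof.
move=> Hx c0 Hb e e0.
have c1 : 0 < c + 1 by rewrite ltr_wpDl.
have [l0 H] := Hx (e / (c + 1)) (divr_gt0 e0 c1).
exists l0 => l /H Hl.
apply: le_lt_trans (Hb l) _.
apply: (@le_lt_trans _ _ ((c + 1) * `|x l - y|)).
  by rewrite ler_wpM2r // lerDl.
by rewrite -(ltr_pM2l c1) mulrCA mulfV ?mulr1 // gt_eqF in Hl.
Qed.

Lemma cvg_add (K : numFieldType) (V : normedModType K) (L : Type)
  (le : L -> L -> Prop) (x x' : L -> V) (y y' : V) :
  directed_set le -> net_cvg le x y -> net_cvg le x' y' ->
  net_cvg le (fun l => x l + x' l) (y + y').
Proof.
move=> [_ _ tr dir] Hx Hy e e0.
have e2 : 0 < e / 2 by rewrite divr_gt0.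
have [l1 H1] := Hx _ e2; have [l2 H2] := Hy _ e2.
have [n [n1 n2]] := dir l1 l2.
exists n => l nl.
have := H1 l (tr _ _ _ n1 nl); have := H2 l (tr _ _ _ n2 nl) => h2 h1.
rewrite (splitr e).
have -> : x l + x' l - (y + y') = (x l - y) + (x' l - y') by rewrite opprD addrACA.
by apply: le_lt_trans (ler_normD _ _) _; rewrite ltrD.
Qed.

Lemma transfer (K : numFieldType) (A : completeNormedModType K)
  (mul : A -> A -> A) (C J : set A) (Q : A -> A) (B : K) :
  0 <= B ->
  (forall x, C x -> J (Q x)) ->
  (forall k x y, C x -> C y -> Q (k *: x + y) = k *: Q x + Q y) ->
  (forall x a, C x -> Q (mul x a) = mul (Q x) a) ->
  (forall x b, C x -> Q (mul b x) = mul b (Q x)) ->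
  (forall x, C x -> `|Q x| <= B * `|x|) ->
  (forall x, J x -> C x) ->
  (forall x, J x -> Q x = x) ->
  J_weakly_amenable mul C -> J_weakly_amenable mul J.
Proof.
move=> B0 CJ Qlin Qr Ql Qb JC QJ hC D [Dd Dlin [M DM] Dder].
have [M' [M'0 DM']] : exists M', 0 <= M' /\
    (forall a x, J x -> `|D a x| <= M' * `|a| * `|x|).
  case: (pselect (exists a x : A, [/\ J x, a != 0 & x != 0])).
    move=> [a [x [Jx a0 x0]]]; exists M; split => //.
    have := le_trans (normr_ge0 _) (DM a x Jx).
    by rewrite -mulrA pmulr_lge0 // mulr_gt0 // normr_gt0.
  move=> nex; exists 0; split => // a x Jx.
  case: (eqVneq a 0) => a0.
    by apply: le_trans (DM a _ Jx) _; rewrite a0 normr0 mulr0 !mul0r.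
  case: (eqVneq x 0) => [x0|x0].
    by have := DM a x Jx; rewrite x0 normr0 !mulr0.
  by exfalso; apply: nex; exists a, x.
have hD : is_derivation_into_dual mul C (fun a x => D a (Q x)).
split.
- move=> a; split.
    by move=> k x y Cx Cy; rewrite Qlin //; apply: (Dd a).1; apply: CJ.
  exists (M' * `|a| * B) => x Cx.
  apply: le_trans (DM' _ _ (CJ _ Cx)) _.
  by rewrite -(mulrA (M' * `|a|)); apply: ler_wpM2l; [rewrite mulr_ge0|apply: Qb].
- by move=> k a b x Cx; apply: Dlin; apply: CJ.
- exists (M' * B) => a x Cx.
  apply: le_trans (DM' _ _ (CJ _ Cx)) _.
  rewrite (mulrAC M' B) -(mulrA (M' * `|a|)); apply: ler_wpM2l; [rewrite mulr_ge0|apply: Qb]; by [].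

- by move=> a b x Cx; rewrite Dder ?(Qr x a) ?(Ql x b) //; apply: CJ.
have [f [flin [Mf fb]] finner] := hC _ hD.
  exists f; first by split; [move=> k x y Jx Jy; apply: flin; apply: JC|
    exists Mf => x Jx; apply: fb; apply: JC].
  by move=> a x Jx; rewrite -finner ?QJ //; apply: JC.
Qed.

Arguments cvg_lip {K V W L le x y z w c}.
Arguments cvg_add {K V L le x x' y y'}.

Lemma cvg_ext (K : numFieldType) (V : normedModType K) (L : Type)
  (le : L -> L -> Prop) (x x' : L -> V) (y : V) :
  (forall l, x l = x' l) -> net_cvg le x' y -> net_cvg le x y.
Proof. by move=> h; have -> : x = x' by apply: funext. Qed.

Arguments cvg_ext {K V L le x x' y}.

Lemma cvg_scale (K : numFieldType) (V : normedModType K) (L : Type)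
  (le : L -> L -> Prop) (x : L -> V) (y : V) (k : K) :
  net_cvg le x y -> net_cvg le (fun l => k *: x l) (k *: y).
Proof.
move=> h; apply: (@cvg_lip K V V L le x y (fun l => k *: x l) (k *: y) `|k| h (normr_ge0 k)) => l.
by rewrite -scalerBr normrZ.
Qed.

Arguments cvg_scale {K V L le x y} k.

Lemma cvg_sub (K : numFieldType) (V : normedModType K) (L : Type)
  (le : L -> L -> Prop) (x x' : L -> V) (y y' : V) :
  directed_set le -> net_cvg le x y -> net_cvg le x' y' ->
  net_cvg le (fun l => x l - x' l) (y - y').
Proof.
move=> d h h'; have := cvg_add d h (cvg_scale (-1) h').
rewrite scaleN1r; apply: cvg_ext => l; by rewrite scaleN1r.
Qed.

Arguments cvg_sub {K V L le x x' y y'}.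

Lemma mulBl (K : numFieldType) (A : completeNormedModType K) (mul : A -> A -> A) :
  banach_algebra_mul mul -> forall a b c, mul (a - b) c = mul a c - mul b c.
Proof.
move=> [_ hl _ _] a b c; have := hl (-1) b a c.
by rewrite !scaleN1r addrC [X in _ = X]addrC.
Qed.

Lemma mulBr (K : numFieldType) (A : completeNormedModType K) (mul : A -> A -> A) :
  banach_algebra_mul mul -> forall a b c, mul c (a - b) = mul c a - mul c b.
Proof.
move=> [_ _ hr _] a b c; have := hr (-1) b a c.
by rewrite !scaleN1r addrC [X in _ = X]addrC.
Qed.

Arguments mulBl {K A mul}.
Arguments mulBr {K A mul}.

Lemma mul0l (K : numFieldType) (A : completeNormedModType K) (mul : A -> A -> A) :
  banach_algebra_mul mul -> forall c, mul 0 c = 0.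
Proof. by move=> h c; have := mulBl h 0 0 c; rewrite !subrr. Qed.

Lemma mul0r (K : numFieldType) (A : completeNormedModType K) (mul : A -> A -> A) :
  banach_algebra_mul mul -> forall c, mul c 0 = 0.
Proof. by move=> h c; have := mulBr h 0 0 c; rewrite !subrr. Qed.

Arguments mul0l {K A mul}.
Arguments mul0r {K A mul}.

Lemma cvg_mulr (K : numFieldType) (A : completeNormedModType K) (mul : A -> A -> A)
  (L : Type) (le : L -> L -> Prop) (x : L -> A) (y b : A) :
  banach_algebra_mul mul -> net_cvg le x y ->
  net_cvg le (fun l => mul (x l) b) (mul y b).
Proof.
move=> h hx; apply: (cvg_lip hx (normr_ge0 b)) => l.
by rewrite -mulBl // mulrC; case: h => _ _ _ ->.
Qed.

Lemma cvg_mull (K : numFieldType) (A : completeNormedModType K) (mul : A -> A -> A)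
  (L : Type) (le : L -> L -> Prop) (x : L -> A) (y b : A) :
  banach_algebra_mul mul -> net_cvg le x y ->
  net_cvg le (fun l => mul b (x l)) (mul b y).
Proof.
move=> h hx; apply: (cvg_lip hx (normr_ge0 b)) => l.
by rewrite -mulBr //; case: h => _ _ _ ->.
Qed.

Arguments cvg_mulr {K A mul L le x y} b.
Arguments cvg_mull {K A mul L le x y} b.

Lemma cvg_uniq (K : numFieldType) (V : normedModType K) (L : Type)
  (le : L -> L -> Prop) (x : L -> V) (y z : V) :
  directed_set le -> net_cvg le x y -> net_cvg le x z -> y = z.
Proof.
move=> [_ rf tr dir] hy hz; apply/eqP; rewrite -subr_eq0 -normr_eq0; apply/eqP.
apply: nm_eq0 => // e e0.
have [l1 H1] := hy e e0; have [l2 H2] := hz e e0.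
have [n [n1 n2]] := dir l1 l2.
have := H1 n n1; have := H2 n n2 => h2 h1.
have -> : y - z = (x n - z) - (x n - y) by rewrite opprB [X in _ = X]addrC addrA subrK.
by apply: le_lt_trans (ler_normB _ _) _; rewrite ltrD.
Qed.
Arguments cvg_uniq {K V L le x y z}.

Theorem theorem3p6 (K : numFieldType) (A : completeNormedModType K)
  (mul : A -> A -> A) (Lam : Type) (le : Lam -> Lam -> Prop) (u : Lam -> A) :
  banach_algebra_mul mul ->
  directed_set le ->
  net_bounded u ->
  quasi_central mul le u ->
  netL mul le u = netI mul le u ->
  J_weakly_amenable mul (netC mul le u) ->
  J_weakly_amenable mul (netI mul le u) /\ J_weakly_amenable mul (netK mul le u).
Proof.
move=> bam dir [B0 hB] qc hL hC.
have bam' := bam; case: bam' => massoc mlinl mlinr mnorm.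
pose P x := xget 0 [set y | net_cvg le (fun l => mul x (u l)) y].
have PC x : netC mul le u x -> net_cvg le (fun l => mul x (u l)) (P x).
  by move=> hx; apply: xgetPex.
have Peq x y : net_cvg le (fun l => mul x (u l)) y -> P x = y.
  by move=> h; apply: (cvg_uniq dir (PC x (ex_intro _ y h)) h).
have Plin k x y : netC mul le u x -> netC mul le u y ->
    P (k *: x + y) = k *: P x + P y.
  move=> Cx Cy; apply: Peq.
  apply: (cvg_ext _ (cvg_add dir (cvg_scale k (PC x Cx)) (PC y Cy))) => l.
  by rewrite mlinl.
have Pr x a : netC mul le u x -> P (mul x a) = mul (P x) a.
  move=> Cx; apply: Peq.
  have := cvg_add dir (cvg_mulr a bam (PC x Cx)) (cvg_mull x bam (qc a)).
  rewrite mul0r // addr0; apply: cvg_ext => l.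
  by rewrite mulBr // !massoc addrC subrK.
have Pl x b : netC mul le u x -> P (mul b x) = mul b (P x).
  move=> Cx; apply: Peq.
  by apply: (cvg_ext _ (cvg_mull b bam (PC x Cx))) => l; rewrite massoc.
have PI x : netC mul le u x -> netI mul le u (P x).
  by move=> Cx; rewrite -hL; exists x => //; apply: PC.
have B0ge : 0 <= B0.
  by case: dir => [[l _] _ _ _]; apply: le_trans (hB l).
have Pb x : netC mul le u x -> `|P x| <= B0 * `|x|.
  move=> Cx; apply: nm_le => //; first by rewrite mulr_ge0.
  move=> e e0; have [l0 H] := PC x Cx e e0.
  have Hl := H l0 (let: And4 _ r _ _ := dir in r l0).
  rewrite -[P x](subrK (mul x (u l0))) .
  apply: le_lt_trans (ler_normD _ _) _.
  rewrite addrC; apply: ler_ltD; last by rewrite distrC.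
  by apply: le_trans (mnorm _ _) _; rewrite mulrC ler_wpM2r.
have IC x : netI mul le u x -> netC mul le u x by move=> h; exists x.
have KC x : netK mul le u x -> netC mul le u x by move=> h; exists 0.
split.
- apply: (@transfer K A mul (netC mul le u) (netI mul le u) P B0 B0ge) hC.
  + exact: PI.
  + exact: Plin.
  + exact: Pr.
  + exact: Pl.
  + exact: Pb.
  + exact: IC.
  + by move=> x Ix; apply: Peq.
- apply: (@transfer K A mul (netC mul le u) (netK mul le u) (fun x => x - P x) (1 + B0)) hC.
  + by rewrite addr_ge0.
  + move=> x Cx; rewrite /netK /=.
    have := cvg_sub dir (PC x Cx) (PI x Cx); rewrite subrr.
    by apply: cvg_ext => l; rewrite mulBl.
  + move=> k x y Cx Cy; rewrite Plin // scalerBr opprD addrACA.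
    by [].
  + by move=> x a Cx; rewrite Pr // mulBl.
  + by move=> x b Cx; rewrite Pl // mulBr.
  + move=> x Cx; apply: le_trans (ler_normB _ _) _.
    by rewrite mulrDl mul1r lerD2l Pb.
  + exact: KC.
  + by move=> x Kx; rewrite (Peq x 0) ?subr0.
Qed.
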